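(* Let $\mathcal{P}_1$ and $\mathcal{P}_2$ be nonempty convex sets (convex subsets of real vector spaces), and let $u_1, u_2 : \mathcal{P}_1 \times \mathcal{P}_2 \to \mathbb{R}$ be functions such that, for each $u \in \{u_1, u_2\}$, all $\sigma = (\sigma_1,\sigma_2), \tau = (\tau_1,\tau_2) \in \mathcal{P}_1 \times \mathcal{P}_2$ and all $\alpha, \beta \in [0,1]$, $$u\bigl(\alpha\sigma_1 + (1-\alpha)\tau_1,\ \beta\sigma_2 + (1-\beta)\tau_2\bigr) = \alpha\, u\bigl(\sigma_1,\ \beta\sigma_2 + (1-\beta)\tau_2\bigr) + (1-\alpha)\, u\bigl(\tau_1,\ \beta\sigma_2 + (1-\beta)\tau_2\bigr)$$ $$= \beta\, u\bigl(\alpha\sigma_1 + (1-\alpha)\tau_1,\ \sigma_2\bigr) + (1-\beta)\, u\bigl(\alpha\sigma_1 + (1-\alpha)\tau_1,\ \tau_2\bigr).$$ Then the following are equivalent: (a) for all $\sigma, \tau \in \mathcal{P}_1 \times \mathcal{P}_2$: $u_1(\sigma) \geq u_1(\tau)$ if and only if $u_2(\sigma) \leq u_2(\tau)$; (b) there exist $\alpha, \beta \in \mathbb{R}$ with $\alpha > 0$ such that $u_2(\sigma) = -\alpha\, u_1(\sigma) + \beta$ for all $\sigma \in \mathcal{P}_1 \times \mathcal{P}_2$; (c) there exist $\gamma, \delta \in \mathbb{R}$ with $\gamma > 0$ such that, setting $v_1 = \gamma u_1 + \delta$, one has $v_1(\sigma) + u_2(\sigma) = 0$ for all $\sigma \in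 \mathcal{P}_1 \times \mathcal{P}_2$.
   Context: A two-person game is a quadruple $\langle \mathcal{P}_1, \mathcal{P}_2, u_1, u_2\rangle$ of strategy sets and real-valued payoff functions on $\mathcal{P}_1\times\mathcal{P}_2$. Condition (a) says the game is adversarial (strictly competitive); the displayed identities say the game is bilinear (bi-affine); (c) says the game obtained by replacing $u_1$ with a positive affine transformation of it is zero-sum. A function $f$ is a positive affine transformation of $g$ if $f = a g + b$ for some reals $a > 0$, $b$. *)

(* Defs.v *)
From HB Require Import structures.
From mathcomp Require Import all_boot all_order all_algebra.
From mathcomp Require Import reals.
Set Implicit Arguments. Unset Strict Implicit. Unset Printing Implicit Defensive.
Import Order.TTheory GRing.Theory Num.Theory.
Local Open Scope ring_scope.

Definition convex_set (R : realType) (V : lmodType R) (P : V -> Prop) : Prop :=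
  forall x y : V, P x -> P y -> forall a : R, 0 <= a -> a <= 1 ->
    P (a *: x + (1 - a) *: y).

Definition bilinear_game (R : realType) (V1 V2 : lmodType R)
    (P1 : V1 -> Prop) (P2 : V2 -> Prop) (u : V1 -> V2 -> R) : Prop :=
  forall s1 t1 : V1, forall s2 t2 : V2,
    P1 s1 -> P1 t1 -> P2 s2 -> P2 t2 ->
  forall a b : R, 0 <= a -> a <= 1 -> 0 <= b -> b <= 1 ->
    u (a *: s1 + (1 - a) *: t1) (b *: s2 + (1 - b) *: t2)
      = a * u s1 (b *: s2 + (1 - b) *: t2) + (1 - a) * u t1 (b *: s2 + (1 - b) *: t2)
 /\ u (a *: s1 + (1 - a) *: t1) (b *: s2 + (1 - b) *: t2)
      = b * u (a *: s1 + (1 - a) *: t1) s2 + (1 - b) * u (a *: s1 + (1 - a) *: t1) t2.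

(* Main.v *)
Require Import Defs.
From HB Require Import structures.
From mathcomp Require Import all_boot all_order all_algebra.
From mathcomp Require Import reals.
From mathcomp Require Import ring lra.
From Stdlib Require Import Classical.
Import Order.TTheory GRing.Theory Num.Theory.
Local Open Scope ring_scope.

Definition affine_on (R : realType) (W : lmodType R) (P : W -> Prop) (f : W -> R) :=
  forall x y, P x -> P y -> forall a : R, 0 <= a -> a <= 1 ->
    f (a *: x + (1 - a) *: y) = a * f x + (1 - a) * f y.

Arguments affine_on {R W}.

Lemma aprime (R : realType) (A B v a k : R) : A != B ->
  `|v - (a * A + (1 - a) * B)| <= k * `|A - B| -> 0 <= a - k -> a + k <= 1 ->
  exists a', 0 <= a' /\ a' <= 1 /\ v = a' * A + (1 - a') * B.
Proof.
move=> nAB hv h1 h2. have d0 : A - B != 0 by rewrite subr_eq0.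
exists ((v - B) / (A - B)).
have E: v - (a * A + (1 - a) * B) = ((v - B) / (A - B) - a) * (A - B).
  by field.
rewrite E normrM ler_pM2r ?normr_gt0 // in hv.
move: hv; rewrite ler_norml => /andP[l1 l2].
split; first lra. split; first lra. by field.
Qed.

Arguments aprime {R A B v a k}.

Lemma core (R : realType) (W : lmodType R) (P : W -> Prop) (f1 h : W -> R) x' d :
  convex_set P -> affine_on P f1 -> affine_on P h -> P x' -> h x' = 0 -> 0 < d ->
  (forall m, P m -> `|f1 m - f1 x'| <= d -> h m = 0) -> forall w, P w -> h w = 0.
Proof.
move=> cP af ah Px hx d0 Hm w Pw.
set e := `|f1 w - f1 x'|.
have e0 : 0 <= e by rewrite /e normr_ge0.
set c := d / (d + e).
have de0 : 0 < d + e by lra.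
have c0 : 0 < c by rewrite divr_gt0.
have c1 : c <= 1 by rewrite ler_pdivrMr // mul1r; lra.
have hm := Hm (c *: w + (1 - c) *: x') (cP _ _ Pw Px _ (ltW c0) c1).
rewrite (af _ _ Pw Px _ (ltW c0) c1) in hm.
have E : c * f1 w + (1 - c) * f1 x' - f1 x' = c * (f1 w - f1 x') by ring.
rewrite E normrM (gtr0_norm c0) -/e in hm.
have : c * e <= d.
  rewrite /c mulrAC ler_pdivrMr //; nra.
move=> /hm; rewrite (ah _ _ Pw Px _ (ltW c0) c1) hx mulr0 addr0 => /eqP.
by rewrite mulf_eq0 (gt_eqF c0) /= => /eqP.
Qed.

Lemma segG (R : realType) (W : lmodType R) (P : W -> Prop) (f1 h : W -> R) x y :
  convex_set P -> affine_on P f1 -> affine_on P h -> P x -> P y ->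
  h x = 0 -> h y = 0 -> f1 x != f1 y ->
  (forall p m, P p -> P m -> f1 p = f1 m -> h p = 0 -> h m = 0) ->
  forall w, P w -> h w = 0.
Proof.
move=> cP af ah Px Py hx hy ne tr.
have h12 : (0:R) <= 1/2 by lra.
have h12' : (1/2:R) <= 1 by lra.
apply: (@core R W P f1 h ((1/2) *: x + (1 - 1/2) *: y) (1/4 * `|f1 x - f1 y|) cP af ah).
- exact: cP.
- by rewrite ah // hx hy; ring.
- by rewrite mulr_gt0 // ?normr_gt0 ?subr_eq0 //; lra.
move=> m Pm; rewrite af //.
move=> /(aprime ne) []; [lra|lra|].
move=> a' [a0 [a1 E]].
apply: (tr (a' *: x + (1 - a') *: y)) => //; first exact: cP.
  by rewrite af.
by rewrite ah // hx hy; ring.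
Qed.

Section Aff.
Variables (R : realType) (V1 V2 : lmodType R) (P1 : V1 -> Prop) (P2 : V2 -> Prop).

Lemma aff1 (u : V1 -> V2 -> R) : bilinear_game P1 P2 u -> forall q, P2 q -> affine_on P1 (fun p => u p q).
Proof.
move=> bg q Pq x y Px Py a a0 a1.
have := bg x y q q Px Py Pq Pq a 1 a0 a1 ler01 (lexx 1).
by rewrite subrr scale0r addr0 scale1r; case.
Qed.

Lemma aff2 (u : V1 -> V2 -> R) : bilinear_game P1 P2 u -> forall p, P1 p -> affine_on P2 (fun q => u p q).
Proof.
move=> bg p Pp x y Px Py a a0 a1.
have := bg p p x y Pp Pp Px Py 1 a ler01 (lexx 1) a0 a1.
by rewrite subrr scale0r addr0 scale1r; case.
Qed.

Lemma bg_swap (u : V1 -> V2 -> R) : bilinear_game P1 P2 u -> bilinear_game P2 P1 (fun p2 p1 => u p1 p2).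
Proof.
move=> bg x2 y2 x1 y1 Hx2 Hy2 Hx1 Hy1 a b a0 a1 b0 b1 /=.
have [E1 E2] := bg x1 y1 x2 y2 Hx1 Hy1 Hx2 Hy2 b a b0 b1 a0 a1.
by split.
Qed.

Lemma trans_eq (u1 u2 : V1 -> V2 -> R) :
  (forall s1 s2 t1 t2, P1 s1 -> P2 s2 -> P1 t1 -> P2 t2 ->
             (u1 s1 s2 >= u1 t1 t2 <-> u2 s1 s2 <= u2 t1 t2)) ->
  forall p1 p2 q1 q2, P1 p1 -> P2 p2 -> P1 q1 -> P2 q2 ->
    u1 p1 p2 = u1 q1 q2 -> u2 p1 p2 = u2 q1 q2.
Proof.
move=> HA p1 p2 q1 q2 a b c d E.
apply/le_anti/andP; split.
  by apply/(HA _ _ _ _ a b c d).1; rewrite E.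
by apply/(HA _ _ _ _ c d a b).1; rewrite E.
Qed.

End Aff.
Arguments aff1 {R V1 V2 P1 P2 u}.
Arguments aff2 {R V1 V2 P1 P2 u}.
Arguments bg_swap {R V1 V2 P1 P2 u}.
Arguments trans_eq {R V1 V2 P1 P2 u1 u2}.

Lemma ML (R : realType) (V1 V2 : lmodType R)
    (P1 : V1 -> Prop) (P2 : V2 -> Prop) (u1 u2 : V1 -> V2 -> R) :
  convex_set P1 -> convex_set P2 ->
  bilinear_game P1 P2 u1 -> bilinear_game P1 P2 u2 ->
  (forall s1 s2 t1 t2, P1 s1 -> P2 s2 -> P1 t1 -> P2 t2 ->
             (u1 s1 s2 >= u1 t1 t2 <-> u2 s1 s2 <= u2 t1 t2)) ->
  forall s1 t1 s2, P1 s1 -> P1 t1 -> P2 s2 -> u1 s1 s2 != u1 t1 s2 ->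
  exists alpha beta : R, 0 < alpha /\
             forall r1 r2, P1 r1 -> P2 r2 -> u2 r1 r2 = - alpha * u1 r1 r2 + beta.
Proof.
move=> cP1 cP2 bg1 bg2 HA s1 t1 s2 Ps1 Pt1 Ps2 neA.
have tr := trans_eq HA.
set A0 := u1 s1 s2; set B0 := u1 t1 s2.
have d0 : A0 - B0 != 0 by rewrite subr_eq0.
pose al := (u2 t1 s2 - u2 s1 s2) / (A0 - B0).
pose be := u2 s1 s2 + al * A0.
pose h := fun p1 p2 => u2 p1 p2 + al * u1 p1 p2 - be.
have Eal : al * (A0 - B0) = u2 t1 s2 - u2 s1 s2 by rewrite /al mulfVK.
have alpos : 0 < al.
  have [lt|gt] : A0 < B0 \/ B0 < A0.
    by move: neA; rewrite neq_lt => /orP[]; [left|right].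
  - have le2 : u2 t1 s2 <= u2 s1 s2 by apply/(HA _ _ _ _ Pt1 Ps2 Ps1 Ps2).1; exact: ltW.
    have ne2 : u2 t1 s2 != u2 s1 s2.
      apply/eqP => E. have : u1 t1 s2 <= u1 s1 s2 by apply/(HA _ _ _ _ Ps1 Ps2 Pt1 Ps2).2; rewrite E.
      rewrite -/A0 -/B0; lra.
    have lt2 : u2 t1 s2 < u2 s1 s2 by rewrite lt_neqAle ne2 le2.
    nra.
  - have le2 : u2 s1 s2 <= u2 t1 s2 by apply/(HA _ _ _ _ Ps1 Ps2 Pt1 Ps2).1; exact: ltW.
    have ne2 : u2 t1 s2 != u2 s1 s2.
      apply/eqP => E. have : u1 s1 s2 <= u1 t1 s2 by apply/(HA _ _ _ _ Pt1 Ps2 Ps1 Ps2).2; rewrite E.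
      rewrite -/A0 -/B0; lra.
    have lt2 : u2 s1 s2 < u2 t1 s2 by rewrite lt_def ne2 le2.
    nra.
exists al, be; split => //.
have ha1 : forall q, P2 q -> affine_on P1 (fun p => h p q).
  move=> q Pq x y Px Py a a0 a1; rewrite /h (aff1 bg1) // (aff1 bg2) //; ring.
have ha2 : forall p, P1 p -> affine_on P2 (fun q => h p q).
  move=> p Pp x y Px Py a a0 a1; rewrite /h (aff2 bg1) // (aff2 bg2) //; ring.
have hx : h s1 s2 = 0 by rewrite /h /be -/A0; ring.
have hy : h t1 s2 = 0.
  have -> : h t1 s2 = u2 t1 s2 - u2 s1 s2 - al * (A0 - B0) by rewrite /h /be -/B0; ring.
  by rewrite Eal subrr.
have trh : forall p1 p2 q1 q2, P1 p1 -> P2 p2 -> P1 q1 -> P2 q2 ->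
    u1 p1 p2 = u1 q1 q2 -> h p1 p2 = 0 -> h q1 q2 = 0.
  by move=> p1 p2 q1 q2 a b c d E; rewrite /h -(tr _ _ _ _ a b c d E) -E.
have S1 : forall r1, P1 r1 -> h r1 s2 = 0.
  apply: (@segG R V1 P1 (fun p => u1 p s2) (fun p => h p s2) s1 t1 cP1 (aff1 bg1 _ Ps2) (ha1 _ Ps2) Ps1 Pt1) => //.
  by move=> p m Pp Pm /= E; apply: trh.
have S2 : forall a, 1/6 <= a -> a <= 5/6 -> forall q, P2 q ->
    h (a *: s1 + (1 - a) *: t1) q = 0.
  move=> a a0 a1.
  have Pp1 : P1 (a *: s1 + (1 - a) *: t1) by apply: cP1 => //; lra.
  apply: (@core R V2 P2 (fun q => u1 (a *: s1 + (1 - a) *: t1) q)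
     (fun q => h (a *: s1 + (1 - a) *: t1) q) s2 (1/6 * `|A0 - B0|) cP2 (aff2 bg1 _ Pp1) (ha2 _ Pp1) Ps2).
  - by rewrite (ha1 _ Ps2) // ?hx ?hy; [ring|lra|lra].
  - by rewrite mulr_gt0 ?normr_gt0 //; lra.
  move=> m Pm /=.
  rewrite (aff1 bg1 _ Ps2) //; [|lra|lra].
  move=> /(aprime neA) []; [lra|lra|].
  move=> a' [b0 [b1 E]].
  apply: (trh (a' *: s1 + (1 - a') *: t1) s2) => //; first exact: cP1.
    by rewrite (aff1 bg1 _ Ps2).
  exact: S1 (cP1 _ _ Ps1 Pt1 _ b0 b1).
have Pm1 : P1 ((1/2) *: s1 + (1 - 1/2) *: t1) by apply: cP1 => //; lra.
have Pn1 : P1 ((1/3) *: s1 + (1 - 1/3) *: t1) by apply: cP1 => //; lra.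
set m1 := (1/2) *: s1 + (1 - 1/2) *: t1 in Pm1.
set n1 := (1/3) *: s1 + (1 - 1/3) *: t1 in Pn1.
have Zm : forall q, P2 q -> h m1 q = 0 by apply: S2; lra.
have Zn : forall q, P2 q -> h n1 q = 0 by apply: S2; lra.
have key : forall r1 r2 b, P1 r1 -> P2 r2 -> 0 <= b -> b < 1 ->
    u1 m1 (b *: s2 + (1 - b) *: r2) != u1 n1 (b *: s2 + (1 - b) *: r2) ->
    h r1 r2 = 0.
  move=> r1 r2 b Pr1 Pr2 b0 b1 neq.
  have Pq : P2 (b *: s2 + (1 - b) *: r2) by apply: cP2 => //; lra.
  have := @segG R V1 P1 _ _ m1 n1 cP1 (aff1 bg1 _ Pq) (ha1 _ Pq) Pm1 Pn1 (Zm _ Pq) (Zn _ Pq) neq.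
  move=> H.
  have := H (fun p m Pp Pm E => trh _ _ _ _ Pp Pq Pm Pq E) _ Pr1.
  rewrite (ha2 _ Pr1) //; last lra.
  rewrite S1 // mulr0 add0r => /eqP; rewrite mulf_eq0 => /orP[/eqP|/eqP //]; lra.
move=> r1 r2 Pr1 Pr2.
have : h r1 r2 = 0.
  have Dm : u1 m1 s2 - u1 n1 s2 = (1/2 - 1/3) * (A0 - B0).
    by rewrite /m1 /n1 !(aff1 bg1 _ Ps2) //; [rewrite -/A0 -/B0; ring|lra|lra|lra|lra].
  have Dq : forall b, 0 <= b -> b <= 1 ->
     u1 m1 (b *: s2 + (1 - b) *: r2) - u1 n1 (b *: s2 + (1 - b) *: r2)
       = b * (u1 m1 s2 - u1 n1 s2) + (1 - b) * (u1 m1 r2 - u1 n1 r2).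
    by move=> b b0 b1; rewrite !(aff2 bg1) //; ring.
  have [E|E] := eqVneq (u1 m1 ((1/2) *: s2 + (1 - 1/2) *: r2)) (u1 n1 ((1/2) *: s2 + (1 - 1/2) *: r2)).
    apply: (key r1 r2 (3/4)) => //; [lra|lra|].
    rewrite -subr_eq0 Dq; [|lra|lra].
    move/eqP: E; rewrite -subr_eq0 Dq; [|lra|lra].
    rewrite Dm => /eqP E; apply/eqP => F.
    move: d0; rewrite subr_eq0 => /eqP; apply; lra.
  by apply: (key r1 r2 (1/2)) => //; lra.
move=> H; have -> : u2 r1 r2 = h r1 r2 - al * u1 r1 r2 + be by rewrite /h; ring.
rewrite H; ring.
Qed.

Arguments ML {R V1 V2 P1 P2 u1 u2}.

Theorem theorem2 (R : realType) (V1 V2 : lmodType R)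
    (P1 : V1 -> Prop) (P2 : V2 -> Prop) (u1 u2 : V1 -> V2 -> R) :
  (exists x, P1 x) -> (exists y, P2 y) ->
  convex_set P1 -> convex_set P2 ->
  bilinear_game P1 P2 u1 -> bilinear_game P1 P2 u2 ->
  let A := forall s1 s2 t1 t2, P1 s1 -> P2 s2 -> P1 t1 -> P2 t2 ->
             (u1 s1 s2 >= u1 t1 t2 <-> u2 s1 s2 <= u2 t1 t2) in
  let B := exists alpha beta : R, 0 < alpha /\
             forall s1 s2, P1 s1 -> P2 s2 -> u2 s1 s2 = - alpha * u1 s1 s2 + beta in
  let C := exists gamma delta : R, 0 < gamma /\
             forall s1 s2, P1 s1 -> P2 s2 -> (gamma * u1 s1 s2 + delta) + u2 s1 s2 = 0 in
  (A <-> B) /\ (B <-> C).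
Proof.
move=> [x0 Px0] [y0 Py0] cP1 cP2 bg1 bg2 A B C.
split; last first.
  split.
    move=> [al [be [al0 H]]]; exists al, (- be); split => // s1 s2 P1s P2s.
    by rewrite H //; ring.
  move=> [g [d [g0 H]]]; exists g, (- d); split => // s1 s2 P1s P2s.
  have E := H s1 s2 P1s P2s.
  transitivity (-(g * u1 s1 s2 + d) + ((g * u1 s1 s2 + d) + u2 s1 s2)); first by rewrite addKr.
  by rewrite E; ring.
split; last first.
  move=> [al [be [al0 H]]] s1 s2 t1 t2 Ps1 Ps2 Pt1 Pt2.
  rewrite !H // lerD2r !mulNr lerN2 ler_pM2l //.
move=> HA.
case: (classic (exists s1 t1 s2, P1 s1 /\ P1 t1 /\ P2 s2 /\ u1 s1 s2 != u1 t1 s2)).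
  move=> [s1 [t1 [s2 [Ps1 [Pt1 [Ps2 ne]]]]]].
  exact: (ML cP1 cP2 bg1 bg2 HA _ _ _ Ps1 Pt1 Ps2 ne).
move=> N1.
case: (classic (exists s2 t2 s1, P2 s2 /\ P2 t2 /\ P1 s1 /\ u1 s1 s2 != u1 s1 t2)).
  move=> [s2 [t2 [s1 [Ps2 [Pt2 [Ps1 ne]]]]]].
  have HA' : forall s2 s1 t2 t1, P2 s2 -> P1 s1 -> P2 t2 -> P1 t1 ->
      ((fun p2 p1 => u1 p1 p2) t2 t1 <= (fun p2 p1 => u1 p1 p2) s2 s1 <->
       (fun p2 p1 => u2 p1 p2) s2 s1 <= (fun p2 p1 => u2 p1 p2) t2 t1).
    by move=> a b c d Pa Pb Pc Pd /=; apply: HA.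
  have [al [be [al0 H]]] := ML cP2 cP1 (bg_swap bg1) (bg_swap bg2) HA' _ _ _ Ps2 Pt2 Ps1 ne.
  exists al, be; split => // r1 r2 Pr1 Pr2.
  exact: (H r2 r1 Pr2 Pr1).
move=> N2.
have cst : forall s1 s2, P1 s1 -> P2 s2 -> u1 s1 s2 = u1 x0 y0.
  move=> s1 s2 Ps1 Ps2.
  have E1 : u1 s1 s2 = u1 x0 s2.
    case: (eqVneq (u1 s1 s2) (u1 x0 s2)) => // ne; exfalso; apply: N1.
    by exists s1, x0, s2.
  have E2 : u1 x0 s2 = u1 x0 y0.
    case: (eqVneq (u1 x0 s2) (u1 x0 y0)) => // ne; exfalso; apply: N2.
    by exists s2, y0, x0.
  by rewrite E1 E2.
exists 1, (u2 x0 y0 + u1 x0 y0); split; first exact: ltr01.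
move=> s1 s2 Ps1 Ps2.
have E := trans_eq HA _ _ _ _ Ps1 Ps2 Px0 Py0 (cst _ _ Ps1 Ps2).
by rewrite E (cst _ _ Ps1 Ps2); ring.
Qed.
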